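(* Assume that $(\mathcal{H}_T)$, $(\mathcal{H}_\varphi)$, $(\mathcal{H}_K)$ and $(\mathcal{H}_0)$ hold and $m\in V^*$. Fix $a\in A$ and define the variational selection $S_a\colon C\to 2^C$ by letting $S_a(w)$ be the set of all $u\in K(w)$ such that $\langle T(a,u),v-u\rangle+\varphi(v)-\varphi(u)\ge\langle m,v-u\rangle$ for all $v\in K(w)$. Then the graph of $S_a$ is sequentially weakly closed: if $\{w_n\},\{u_n\}\subset C$, $u_n\in S_a(w_n)$, $w_n\rightharpoonup w$ and $u_n\rightharpoonup u$ weakly in $V$, then $u\in S_a(w)$. Moreover, the set $S_a(C)=\bigcup_{w\in C}S_a(w)$ is bounded in $V$.
   Context: Let $V$ be a real reflexive Banach space with dual $V^*$ and duality pairing $\langle\cdot,\cdot\rangle$, let $C\subseteq V$ be nonempty, closed and convex, let $B$ be a real Banach space and $A\subseteq B$ a nonempty set of parameters, and let $T\colon B\times V\to V^*$, $\varphi\colon V\to\mathbb{R}\cup\{+\infty\}$, $K\colon C\to 2^C$, $m\in V^*$ be given. Hypothesis $(\mathcal{H}_T)$: $T$ is bounded (maps bounded sets to bounded sets); for each $u\in V$ the map $T(\cdot,u)\colon B\to V^*$ is linear; for each $a\in A$ the map $T(a,\cdot)\colon V\to V^*$ is monotone and continuous. Hypothesis $(\mathcal{H}_\varphi)$: $\varphi$ is proper, convex and lower semicontinuous, and $C\subseteq\operatorname{int}(\operatorname{dom}\varphi)$. Hypothesis $(\mathcal{H}_K)$: for every $u\in C$ the set $K(u)\subseteq C$ is nonempty,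 closed and convex, and (i) for any sequence $\{x_n\}\subset C$ with $x_n\rightharpoonup x$ weakly and any $y\in K(x)$ there is a sequence $\{y_n\}\subset C$ with $y_n\in K(x_n)$ and $y_n\to y$ strongly; (ii) for any sequences $\{x_n\},\{y_n\}\subset C$ with $y_n\in K(x_n)$, $x_n\rightharpoonup x$ and $y_n\rightharpoonup y$, one has $y\in K(x)$. Hypothesis $(\mathcal{H}_0)$: there is a bounded set $C_0\subseteq V$ with $K(u)\cap C_0\neq\emptyset$ for every $u\in C$, and a function $h\colon[0,\infty)\to\mathbb{R}$ with $h(t)\to+\infty$ as $t\to+\infty$ such that $\langle T(a,w),w-v_0\rangle+\varphi(w)-\varphi(v_0)\ge h(\|w\|_V)\|w\|_V$ for all $v_0\in C_0$, $a\in A$, $w\in C$. *)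

(* Defs.v *)
From Stdlib Require Import Reals.
Open Scope R_scope.

Record NormedSpace := mkNS {
  ns_car :> Type;
  ns_zero : ns_car;
  ns_add : ns_car -> ns_car -> ns_car;
  ns_opp : ns_car -> ns_car;
  ns_scal : R -> ns_car -> ns_car;
  ns_norm : ns_car -> R;
  ns_addA : forall x y z, ns_add x (ns_add y z) = ns_add (ns_add x y) z;
  ns_addC : forall x y, ns_add x y = ns_add y x;
  ns_add0 : forall x, ns_add ns_zero x = x;
  ns_addN : forall x, ns_add x (ns_opp x) = ns_zero;
  ns_scalA : forall a b x, ns_scal a (ns_scal b x) = ns_scal (a * b) x;
  ns_scal1 : forall x, ns_scal 1 x = x;
  ns_scalDr : forall a x y, ns_scal a (ns_add x y) = ns_add (ns_scal a x) (ns_scal a y);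
  ns_scalDl : forall a b x, ns_scal (a + b) x = ns_add (ns_scal a x) (ns_scal b x);
  ns_norm_eq0 : forall x, ns_norm x = 0 -> x = ns_zero;
  ns_normZ : forall a x, ns_norm (ns_scal a x) = Rabs a * ns_norm x;
  ns_normD : forall x y, ns_norm (ns_add x y) <= ns_norm x + ns_norm y
}.

Arguments ns_zero {_}.
Arguments ns_add {_}.
Arguments ns_opp {_}.
Arguments ns_scal {_}.
Arguments ns_norm {_}.

Definition ns_sub {V : NormedSpace} (x y : V) : V := ns_add x (ns_opp y).

Definition norm_cv {V : NormedSpace} (u : nat -> V) (x : V) : Prop :=
  Un_cv (fun n => ns_norm (ns_sub (u n) x)) 0.

Definition ns_complete (V : NormedSpace) : Prop :=
  forall u : nat -> V,
    (forall eps, eps > 0 -> exists N, forall n m, (n >= N)%nat -> (m >= N)%nat ->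
        ns_norm (ns_sub (u n) (u m)) < eps) ->
    exists x, norm_cv u x.

Definition is_linear {V : NormedSpace} (f : V -> R) : Prop :=
  (forall x y, f (ns_add x y) = f x + f y) /\ (forall c x, f (ns_scal c x) = c * f x).

Definition dual_bound {V : NormedSpace} (f : V -> R) (c : R) : Prop :=
  forall x, Rabs (f x) <= c * ns_norm x.

(** f is an element of V^* (bounded = continuous linear functional). *)
Definition in_dual {V : NormedSpace} (f : V -> R) : Prop :=
  is_linear f /\ exists M, dual_bound f M.

(** Bounded linear functionals on V^* (elements of V^** ). *)
Definition in_bidual {V : NormedSpace} (Phi : (V -> R) -> R) : Prop :=
  (forall f g, (forall x, f x = g x) -> Phi f = Phi g) /\
  (forall f g, in_dual f -> in_dual g -> Phi (fun x => f x + g x) = Phi f + Phi g) /\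
  (forall c f, in_dual f -> Phi (fun x => c * f x) = c * Phi f) /\
  (exists M, forall f c, in_dual f -> dual_bound f c -> Rabs (Phi f) <= M * c).

Definition ns_reflexive (V : NormedSpace) : Prop :=
  forall Phi : (V -> R) -> R, in_bidual Phi ->
    exists x : V, forall f, in_dual f -> Phi f = f x.

Definition weak_cv {V : NormedSpace} (u : nat -> V) (x : V) : Prop :=
  forall f, in_dual f -> Un_cv (fun n => f (u n)) (f x).

Definition ns_convex_set {V : NormedSpace} (C : V -> Prop) : Prop :=
  forall x y t, 0 <= t <= 1 -> C x -> C y ->
    C (ns_add (ns_scal t x) (ns_scal (1 - t) y)).

Definition ns_closed_set {V : NormedSpace} (C : V -> Prop) : Prop :=
  forall (u : nat -> V) x, (forall n, C (u n)) -> norm_cv u x -> C x.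

Definition ns_bounded_set {V : NormedSpace} (C : V -> Prop) : Prop :=
  exists M, forall x, C x -> ns_norm x <= M.

Inductive ERbar := Fin (r : R) | PInf.

Definition ERle (x y : ERbar) : Prop :=
  match x, y with
  | _, PInf => True
  | PInf, Fin _ => False
  | Fin a, Fin b => a <= b
  end.

Definition proper_fun {V : NormedSpace} (phi : V -> ERbar) : Prop :=
  exists x, phi x <> PInf.

Definition convex_fun {V : NormedSpace} (phi : V -> ERbar) : Prop :=
  forall x y t, 0 < t < 1 ->
    match phi x, phi y with
    | Fin a, Fin b => ERle (phi (ns_add (ns_scal t x) (ns_scal (1 - t) y))) (Fin (t * a + (1 - t) * b))
    | _, _ => True
    end.

Definition lsc_fun {V : NormedSpace} (phi : V -> ERbar) : Prop :=
  forall (u : nat -> V) x c, norm_cv u x ->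
    (forall n, ERle (phi (u n)) (Fin c)) -> ERle (phi x) (Fin c).

Definition in_int_dom {V : NormedSpace} (phi : V -> ERbar) (C : V -> Prop) : Prop :=
  forall x, C x -> exists r, r > 0 /\
    forall y, ns_norm (ns_sub y x) < r -> phi y <> PInf.

(** Hypothesis (H_T). T : B × V -> V^*, T a u x = <T(a,u), x>. *)
Definition H_T {B V : NormedSpace} (A : B -> Prop) (T : B -> V -> V -> R) : Prop :=
  (forall a u, in_dual (T a u)) /\
  (forall M, exists N, forall a u, ns_norm a <= M -> ns_norm u <= M -> dual_bound (T a u) N) /\
  (forall a b u x, T (ns_add a b) u x = T a u x + T b u x) /\
  (forall c a u x, T (ns_scal c a) u x = c * T a u x) /\
  (forall a, A a -> forall u v, T a u (ns_sub u v) - T a v (ns_sub u v) >= 0) /\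
  (forall a, A a -> forall (un : nat -> V) u, norm_cv un u ->
     forall eps, eps > 0 -> exists N, forall n, (n >= N)%nat ->
       dual_bound (fun x => T a (un n) x - T a u x) eps).

Definition H_phi {V : NormedSpace} (phi : V -> ERbar) (C : V -> Prop) : Prop :=
  proper_fun phi /\ convex_fun phi /\ lsc_fun phi /\ in_int_dom phi C.

(** Hypothesis (H_K); [K x y] means y ∈ K(x). *)
Definition H_K {V : NormedSpace} (C : V -> Prop) (K : V -> V -> Prop) : Prop :=
  (forall u, C u ->
     (forall y, K u y -> C y) /\ (exists y, K u y) /\
     ns_closed_set (K u) /\ ns_convex_set (K u)) /\
  (forall (xn : nat -> V) x y, (forall n, C (xn n)) -> weak_cv xn x -> K x y ->
     exists yn : nat -> V, (forall n, C (yn n)) /\ (forall n, K (xn n) (yn n)) /\ norm_cv yn y) /\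
  (forall (xn yn : nat -> V) x y, (forall n, C (xn n)) -> (forall n, C (yn n)) ->
     (forall n, K (xn n) (yn n)) -> weak_cv xn x -> weak_cv yn y -> K x y).

Definition H_0 {B V : NormedSpace} (A : B -> Prop) (T : B -> V -> V -> R)
    (phi : V -> ERbar) (C : V -> Prop) (K : V -> V -> Prop) : Prop :=
  exists (C0 : V -> Prop) (h : R -> R),
    ns_bounded_set C0 /\
    (forall u, C u -> exists v, K u v /\ C0 v) /\
    (forall M, exists t0, forall t, t >= t0 -> h t >= M) /\
    (forall v0 a w, C0 v0 -> A a -> C w ->
       exists pw pv, phi w = Fin pw /\ phi v0 = Fin pv /\
         T a w (ns_sub w v0) + pw - pv >= h (ns_norm w) * ns_norm w).

(** Variational selection: [S_a T phi K m a w u] means u ∈ S_a(w). *)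
Definition S_a {B V : NormedSpace} (T : B -> V -> V -> R) (phi : V -> ERbar)
    (K : V -> V -> Prop) (m : V -> R) (a : B) (w u : V) : Prop :=
  K w u /\
  exists pu, phi u = Fin pu /\
  forall v, K w v ->
    match phi v with
    | Fin pv => T a u (ns_sub v u) + pv - pu >= m (ns_sub v u)
    | PInf => True
    end.

(* Main.v *)
Require Import Defs.
From mathcomp Require classical_sets boolp.
From Stdlib Require Import Reals Lra Lia List Classical ClassicalEpsilon.
Open Scope R_scope.

Section Alg.
Context {V : NormedSpace}.
Implicit Types x y z : V.

Lemma addr0 x : ns_add x ns_zero = x.
Proof. rewrite ns_addC; apply ns_add0. Qed.

Lemma add_cancel_l x y z : ns_add x y = ns_add x z -> y = z.
Proof.
  intro H. rewrite <- (ns_add0 V y), <- (ns_add0 V z).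
  rewrite <- (ns_addN V x). rewrite (ns_addC V x (ns_opp x)).
  rewrite <- !ns_addA, H. reflexivity.
Qed.

Lemma scal0r x : ns_scal 0 x = ns_zero.
Proof.
  apply (add_cancel_l (ns_scal 0 x)). rewrite addr0, <- ns_scalDl.
  f_equal; ring.
Qed.

Lemma scalr0 (a : R) : ns_scal a (@ns_zero V) = ns_zero.
Proof.
  rewrite <- (scal0r ns_zero), ns_scalA. rewrite Rmult_0_r. reflexivity.
Qed.

Lemma opp_scal x : ns_opp x = ns_scal (-1) x.
Proof.
  apply (add_cancel_l x). rewrite ns_addN.
  rewrite <- (ns_scal1 V x) at 1. rewrite <- ns_scalDl.
  replace (1 + -1) with 0 by ring. now rewrite scal0r.
Qed.

Lemma norm0 : ns_norm (@ns_zero V) = 0.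
Proof. rewrite <- (scal0r ns_zero), ns_normZ, Rabs_R0. ring. Qed.

Lemma norm_opp x : ns_norm (ns_opp x) = ns_norm x.
Proof. rewrite opp_scal, ns_normZ. rewrite Rabs_left by lra. ring. Qed.

Lemma norm_ge0 x : 0 <= ns_norm x.
Proof.
  pose proof (ns_normD V x (ns_opp x)) as H.
  rewrite ns_addN, norm0, norm_opp in H. lra.
Qed.

End Alg.

Inductive vexp := VAt (n : nat) | V0 | VAdd (a b : vexp) | VOpp (a : vexp) | VScal (r : R) (a : vexp).

Fixpoint den {V : NormedSpace} (env : list V) (e : vexp) : V :=
  match e with
  | VAt n => nth n env ns_zero
  | V0 => ns_zero
  | VAdd a b => ns_add (den env a) (den env b)
  | VOpp a => ns_opp (den env a)
  | VScal r a => ns_scal r (den env a)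
  end.

Fixpoint coef (e : vexp) (i : nat) : R :=
  match e with
  | VAt n => if Nat.eqb n i then 1 else 0
  | V0 => 0
  | VAdd a b => coef a i + coef b i
  | VOpp a => - coef a i
  | VScal r a => r * coef a i
  end.

Fixpoint lcF {V : NormedSpace} (l : list V) (c : nat -> R) : V :=
  match l with
  | nil => ns_zero
  | x :: l => ns_add (ns_scal (c O) x) (lcF l (fun i => c (S i)))
  end.

Section Refl.
Context {V : NormedSpace}.

Lemma lcF_ext (l : list V) c1 c2 : (forall i, (i < length l)%nat -> c1 i = c2 i) -> lcF l c1 = lcF l c2.
Proof.
  revert c1 c2; induction l as [|x l IH]; intros c1 c2 H; simpl; auto.
  rewrite (H O) by (simpl; lia). f_equal. apply IH. intros i Hi. apply H. simpl; lia.
Qed.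

Lemma lcF_add (l : list V) c1 c2 : lcF l (fun i => c1 i + c2 i) = ns_add (lcF l c1) (lcF l c2).
Proof.
  revert c1 c2; induction l as [|x l IH]; intros c1 c2; simpl.
  - now rewrite ns_add0.
  - rewrite IH, ns_scalDl.
    rewrite <- !ns_addA. f_equal. rewrite !ns_addA. f_equal. apply ns_addC.
Qed.

Lemma lcF_scal (l : list V) r c : lcF l (fun i => r * c i) = ns_scal r (lcF l c).
Proof.
  revert c; induction l as [|x l IH]; intros c; simpl.
  - now rewrite scalr0.
  - rewrite IH, ns_scalDr, ns_scalA. reflexivity.
Qed.

Lemma lcF_zero (l : list V) : lcF l (fun _ => 0) = ns_zero.
Proof.
  induction l as [|x l IH]; simpl; auto. rewrite IH, scal0r. apply ns_add0.
Qed.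

Lemma lcF_at (l : list V) n : lcF l (fun i => if Nat.eqb n i then 1 else 0) = nth n l ns_zero.
Proof.
  revert n; induction l as [|x l IH]; intros n; simpl.
  - destruct n; reflexivity.
  - destruct n as [|n]; simpl.
    + rewrite ns_scal1. try rewrite (lcF_ext l _ (fun _ => 0)) by (intros; reflexivity).
      rewrite lcF_zero. apply addr0.
    + rewrite scal0r, ns_add0. apply IH.
Qed.

Lemma den_lc (env : list V) e : den env e = lcF env (coef e).
Proof.
  induction e; simpl.
  - symmetry; apply lcF_at.
  - symmetry; apply lcF_zero.
  - rewrite lcF_add, IHe1, IHe2; reflexivity.
  - rewrite IHe. rewrite (lcF_ext env (fun i => - coef e i) (fun i => -1 * coef e i)) by (intros; ring).
    rewrite lcF_scal, opp_scal. reflexivity.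
  - rewrite lcF_scal, IHe. reflexivity.
Qed.

Lemma den_eq (env : list V) e1 e2 :
  (forall i, (i < length env)%nat -> coef e1 i = coef e2 i) -> den env e1 = den env e2.
Proof. intro H. rewrite !den_lc. now apply lcF_ext. Qed.

End Refl.

Ltac vgather t acc :=
  lazymatch t with
  | ns_add ?a ?b => let acc := vgather a acc in vgather b acc
  | ns_sub ?a ?b => let acc := vgather a acc in vgather b acc
  | ns_opp ?a => vgather a acc
  | ns_scal _ ?a => vgather a acc
  | ns_zero => acc
  | _ => lazymatch acc with
         | context [cons t _] => acc
         | _ => constr:(cons t acc)
         end
  end.

Ltac vindex x l :=
  lazymatch l with
  | cons x _ => constr:(O)
  | cons _ ?l' => let n := vindex x l' in constr:(S n)
  end.

Ltac vreify t env :=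
  lazymatch t with
  | ns_add ?a ?b => let ea := vreify a env in let eb := vreify b env in constr:(VAdd ea eb)
  | ns_sub ?a ?b => let ea := vreify a env in let eb := vreify b env in constr:(VAdd ea (VOpp eb))
  | ns_opp ?a => let ea := vreify a env in constr:(VOpp ea)
  | ns_scal ?r ?a => let ea := vreify a env in constr:(VScal r ea)
  | ns_zero => constr:(V0)
  | _ => let n := vindex t env in constr:(VAt n)
  end.

Ltac vring_core :=
  lazymatch goal with
  | |- @eq (ns_car ?V) ?x ?y =>
      let env0 := constr:(@nil (ns_car V)) in
      let env1 := vgather x env0 in
      let env := vgather y env1 in
      let e1 := vreify x env in
      let e2 := vreify y env in
      change (den env e1 = den env e2); apply den_eq;
      let i := fresh "i" in let Hi := fresh "Hi" in
      intros i Hi; cbn [length] in Hi;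
      repeat (destruct i as [|i]; [cbn [coef Nat.eqb] | try (exfalso; lia)])
  end.

Ltac vring := vring_core; try ring.



Lemma Rabs_le_inv a b : Rabs a <= b -> - b <= a <= b.
Proof. unfold Rabs; destruct (Rcase_abs a); lra. Qed.

Lemma Rabs_lt_inv a b : Rabs a < b -> - b < a < b.
Proof. unfold Rabs; destruct (Rcase_abs a); lra. Qed.

Section Basic.
Context {V : NormedSpace}.
Implicit Types x y z : V.

Lemma lin0 (f : V -> R) : is_linear f -> f ns_zero = 0.
Proof.
  intros [Ha _]. pose proof (Ha ns_zero ns_zero) as H. rewrite ns_add0 in H. lra.
Qed.

Lemma lin_sub (f : V -> R) x y : is_linear f -> f (ns_sub x y) = f x - f y.
Proof.
  intros Hf. pose proof Hf as [Ha Hs]. unfold ns_sub. rewrite Ha, opp_scal, Hs. ring.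
Qed.

Lemma lin_add (f : V -> R) x y : is_linear f -> f (ns_add x y) = f x + f y.
Proof. intros [Ha _]; apply Ha. Qed.

Lemma lin_scal (f : V -> R) c x : is_linear f -> f (ns_scal c x) = c * f x.
Proof. intros [_ Hs]; apply Hs. Qed.

Lemma dual_pos (f : V -> R) : in_dual f -> exists M, 0 < M /\ forall x, Rabs (f x) <= M * ns_norm x.
Proof.
  intros [_ [M HM]]. exists (Rabs M + 1). split. pose proof (Rabs_pos M); lra.
  intros x. specialize (HM x). pose proof (norm_ge0 x). pose proof (Rle_abs M).
  assert (M * ns_norm x <= (Rabs M + 1) * ns_norm x) by (apply Rmult_le_compat_r; lra). lra.
Qed.

Lemma norm_tri x y z : ns_norm (ns_sub x z) <= ns_norm (ns_sub x y) + ns_norm (ns_sub y z).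
Proof.
  replace (ns_sub x z) with (ns_add (ns_sub x y) (ns_sub y z)) by vring. apply ns_normD.
Qed.

Lemma norm_sym x y : ns_norm (ns_sub x y) = ns_norm (ns_sub y x).
Proof.
  replace (ns_sub x y) with (ns_opp (ns_sub y x)) by vring. apply norm_opp.
Qed.

Lemma norm_sub0 x : ns_norm (ns_sub x ns_zero) = ns_norm x.
Proof. f_equal. vring. Qed.

Lemma norm_sub_le x y : ns_norm (ns_sub x y) <= ns_norm x + ns_norm y.
Proof. unfold ns_sub. rewrite <- (norm_opp y). apply ns_normD. Qed.

Lemma norm_le_sub x y : ns_norm x <= ns_norm (ns_sub x y) + ns_norm y.
Proof.
  replace x with (ns_add (ns_sub x y) y) at 1 by vring. apply ns_normD.
Qed.

Lemma norm_cv_eps (u : nat -> V) x : norm_cv u x ->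
  forall eps, eps > 0 -> exists N, forall n, (n >= N)%nat -> ns_norm (ns_sub (u n) x) < eps.
Proof.
  intros H eps Heps. destruct (H eps Heps) as [N HN]. exists N. intros n Hn.
  specialize (HN n Hn). unfold R_dist in HN. rewrite Rminus_0_r, Rabs_right in HN; auto.
  apply Rle_ge, norm_ge0.
Qed.

Lemma eps_norm_cv (u : nat -> V) x :
  (forall eps, eps > 0 -> exists N, forall n, (n >= N)%nat -> ns_norm (ns_sub (u n) x) < eps) ->
  norm_cv u x.
Proof.
  intros H eps Heps. destruct (H eps Heps) as [N HN]. exists N. intros n Hn.
  unfold R_dist. rewrite Rminus_0_r, Rabs_right; auto. apply Rle_ge, norm_ge0.
Qed.

Lemma weak_eps (u : nat -> V) x f : weak_cv u x -> in_dual f ->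
  forall eps, eps > 0 -> exists N, forall n, (n >= N)%nat -> Rabs (f (u n) - f x) < eps.
Proof. intros H Hf eps Heps. exact (H f Hf eps Heps). Qed.

Lemma norm_cv_bounded (u : nat -> V) x : norm_cv u x ->
  exists N, forall n, (n >= N)%nat -> ns_norm (u n) <= ns_norm x + 1.
Proof.
  intros H. destruct (norm_cv_eps u x H 1 ltac:(lra)) as [N HN]. exists N. intros n Hn.
  specialize (HN n Hn). pose proof (norm_le_sub (u n) x). lra.
Qed.

End Basic.

Lemma finite_of {V : NormedSpace} (phi : V -> ERbar) x : phi x <> PInf -> exists p, phi x = Fin p.
Proof. destruct (phi x); [eauto | congruence]. Qed.

Lemma part2 (V B : NormedSpace) (C : V -> Prop) (A : B -> Prop)
  (T : B -> V -> V -> R) (phi : V -> ERbar) (K : V -> V -> Prop) (m : V -> R)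
  (HT : H_T A T) (HK : H_K C K) (H0 : H_0 A T phi C K)
  (Hm : in_dual m) (a : B) (Ha : A a) :
  ns_bounded_set (fun u => exists w, C w /\ S_a T phi K m a w u).
Proof.
  destruct H0 as [C0 [h [[R0 HR0] [HC0 [Hh Hcoer]]]]].
  destruct (dual_pos m Hm) as [Mm [HMm HmB]].
  destruct (Hh (Mm + 1)) as [t0 Ht0].
  exists (Rmax t0 (Mm * R0)). intros u [w [Cw [Kwu [pu [Hpu Hineq]]]]].
  destruct HK as [HK1 _]. destruct (HK1 w Cw) as [HKC _].
  assert (Cu : C u) by (apply HKC; auto).
  destruct (HC0 w Cw) as [v0 [Kv0 C0v0]].
  destruct (Hcoer v0 a u C0v0 Ha Cu) as [pw [pv [Hpw [Hpv Hc]]]].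
  rewrite Hpu in Hpw. injection Hpw as <-.
  specialize (Hineq v0 Kv0). rewrite Hpv in Hineq.
  destruct HT as [HTd _]. destruct (HTd a u) as [HTl _].
  rewrite !(lin_sub _ _ _ HTl) in *. rewrite (lin_sub _ _ _ (proj1 Hm)) in Hineq.
  pose proof (Rabs_le_inv _ _ (HmB u)). pose proof (Rabs_le_inv _ _ (HmB v0)). pose proof (HR0 v0 C0v0).
  pose proof (norm_ge0 u). pose proof (norm_ge0 v0).
  assert (Mm * ns_norm v0 <= Mm * R0) by (apply Rmult_le_compat_l; lra).
  destruct (Rlt_or_le (ns_norm u) t0) as [Hl|Hl].
  - apply Rle_trans with t0; [lra | apply Rmax_l].
  - specialize (Ht0 (ns_norm u) (Rle_ge _ _ Hl)).
    assert ((Mm + 1) * ns_norm u <= h (ns_norm u) * ns_norm u) by (apply Rmult_le_compat_r; lra).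
    apply Rle_trans with (Mm * R0); [nra | apply Rmax_r].
Qed.

Lemma ZL_prop (T : Type) (t0 : T) (R : T -> T -> Prop) :
  (forall t, R t t) -> (forall r s t, R r s -> R s t -> R r t) ->
  (forall A : T -> Prop, (forall s t, A s -> A t -> R s t \/ R t s) -> exists t, forall s, A s -> R s t) ->
  exists t, forall s, R t s -> R s t.
Proof.
  intros Hr Ht Hc.
  destruct (@classical_sets.ZL_preorder T t0 (fun s t => boolp.asbool (R s t))) as [t Hm].
  - intros x. apply boolp.asboolT. apply Hr.
  - intros r s t H1 H2. apply boolp.asboolT. apply (Ht r s t); apply boolp.asboolW; assumption.
  - intros A HA. destruct (Hc A) as [t Htt].
    + intros s t Hs Htt. destruct (HA s t Hs Htt); [left|right]; apply boolp.asboolW; assumption.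
    + exists t. intros s Hs. apply boolp.asboolT. auto.
  - exists t. intros s Hs. apply boolp.asboolW. apply Hm. apply boolp.asboolT. exact Hs.
Qed.

Lemma div_le_div a b s t : 0 < s -> 0 < t -> a * t <= b * s -> a / s <= b / t.
Proof.
  intros Hs Ht H.
  replace (a / s) with ((a * t) * / (s * t)) by (field; lra).
  replace (b / t) with ((b * s) * / (s * t)) by (field; lra).
  apply Rmult_le_compat_r; [|exact H]. left; apply Rinv_0_lt_compat, Rmult_lt_0_compat; lra.
Qed.

Section HB.
Context {V : NormedSpace} (U : V -> Prop) (r : R) (Hr : 0 < r) (HUc : ns_convex_set U)
  (HUb : forall x, ns_norm x < r -> U x).

Definition good (M : V -> Prop) (g : V -> R) : Prop :=
  M ns_zero /\ (forall x y, M x -> M y -> M (ns_add x y)) /\ (forall c x, M x -> M (ns_scal c x)) /\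
  (forall x y, M x -> M y -> g (ns_add x y) = g x + g y) /\ (forall c x, M x -> g (ns_scal c x) = c * g x) /\
  (forall x, M x -> U x -> g x <= 1).

Definition ext (M1 : V -> Prop) (g1 : V -> R) (M2 : V -> Prop) (g2 : V -> R) :=
  (forall x, M1 x -> M2 x) /\ (forall x, M1 x -> g1 x = g2 x).

Lemma good_g0 M g : good M g -> g ns_zero = 0.
Proof.
  intros (H0 & _ & _ & _ & Hs & _). rewrite <- (scal0r ns_zero), Hs by exact H0. ring.
Qed.


Lemma decomp_uniq (M : V -> Prop) (g : V -> R) (y : V) m1 m2 t1 t2 : good M g -> ~ M y -> M m1 -> M m2 ->
  ns_add m1 (ns_scal t1 y) = ns_add m2 (ns_scal t2 y) -> m1 = m2 /\ t1 = t2.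
Proof.
  intros (H0 & Hadd & Hsc & _) Hy H1 H2 H.
  assert (Ht : t1 = t2).
  { destruct (Req_dec t1 t2) as [|Hne]; auto. exfalso. apply Hy.
    assert (E : y = ns_scal (1 / (t1 - t2)) (ns_sub (ns_add m1 (ns_scal t1 y)) (ns_add m1 (ns_scal t2 y)))).
    { vring_core; try field; lra. }
    rewrite H in E.
    replace (ns_scal (1 / (t1 - t2)) (ns_sub (ns_add m2 (ns_scal t2 y)) (ns_add m1 (ns_scal t2 y))))
      with (ns_scal (1 / (t1 - t2)) (ns_add m2 (ns_scal (-1) m1))) in E by vring.
    rewrite E. apply Hsc, Hadd; auto. }
  split; auto. subst t2.
  replace m1 with (ns_sub (ns_add m1 (ns_scal t1 y)) (ns_scal t1 y)) by vring.
  rewrite H. vring.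
Qed.

Lemma one_step M g y c : good M g -> ~ M y ->
  (forall m t, M m -> U (ns_add m (ns_scal t y)) -> g m + t * c <= 1) ->
  exists M' g', good M' g' /\ ext M g M' g' /\ M' y /\ g' y = c.
Proof.
  intros HG Hy Hc.
  pose (M' := fun x => exists m t, M m /\ x = ns_add m (ns_scal t y)).
  pose (P := fun x (p : V * R) => M (fst p) /\ x = ns_add (fst p) (ns_scal (snd p) y)).
  pose (g' := fun x => let p := epsilon (inhabits (ns_zero, 0)) (P x) in g (fst p) + snd p * c).
  assert (Hg' : forall m t, M m -> g' (ns_add m (ns_scal t y)) = g m + t * c).
  { intros m t Hm. unfold g'.
    destruct (epsilon_spec (inhabits (ns_zero, 0)) (P (ns_add m (ns_scal t y)))) as [Hp1 Hp2].
    { exists (m, t). split; auto. }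
    destruct (decomp_uniq M g y _ _ _ _ HG Hy Hp1 Hm (eq_sym Hp2)) as [-> ->]. reflexivity. }
  pose proof HG as (H0 & Hadd & Hsc & Hgadd & Hgsc & Hdom).
  exists M', g'. split; [|split; [|split]].
  - split; [|split; [|split; [|split; [|split]]]].
    + exists ns_zero, 0. split; auto. vring.
    + intros x z (m1 & t1 & Hm1 & ->) (m2 & t2 & Hm2 & ->).
      exists (ns_add m1 m2), (t1 + t2). split; auto. vring.
    + intros d x (m1 & t1 & Hm1 & ->). exists (ns_scal d m1), (d * t1). split; auto. vring.
    + intros x z (m1 & t1 & Hm1 & ->) (m2 & t2 & Hm2 & ->).
      replace (ns_add (ns_add m1 (ns_scal t1 y)) (ns_add m2 (ns_scal t2 y)))
        with (ns_add (ns_add m1 m2) (ns_scal (t1 + t2) y)) by vring.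
      rewrite !Hg', Hgadd; auto. ring.
    + intros d x (m1 & t1 & Hm1 & ->).
      replace (ns_scal d (ns_add m1 (ns_scal t1 y))) with (ns_add (ns_scal d m1) (ns_scal (d * t1) y)) by vring.
      rewrite !Hg', Hgsc; auto. ring.
    + intros x (m1 & t1 & Hm1 & ->) HU. rewrite Hg'; auto.
  - split.
    + intros x Hx. exists x, 0. split; auto. vring.
    + intros x Hx. replace x with (ns_add x (ns_scal 0 y)) at 2 by vring. rewrite Hg'; auto. ring.
  - exists ns_zero, 1. split; auto. vring.
  - replace y with (ns_add ns_zero (ns_scal 1 y)) at 1 by vring. rewrite Hg'; auto.
    rewrite (good_g0 M g HG). ring.
Qed.

Lemma key_ineq M g y m1 s m2 t : good M g -> M m1 -> M m2 -> 0 < s -> 0 < t ->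
  U (ns_add m1 (ns_scal (- s) y)) -> U (ns_add m2 (ns_scal t y)) ->
  (g m1 - 1) / s <= (1 - g m2) / t.
Proof.
  intros (H0 & Hadd & Hsc & Hgadd & Hgsc & Hdom) Hm1 Hm2 Hs Ht HU1 HU2.
  set (l := t / (s + t)).
  assert (Hl : 0 <= l <= 1).
  { unfold l; split. apply Rmult_le_pos; [lra|left; apply Rinv_0_lt_compat; lra].
    apply Rmult_le_reg_r with (s + t); [lra|]. unfold Rdiv. rewrite Rmult_assoc, Rinv_l by lra. lra. }
  pose proof (HUc _ _ l Hl HU1 HU2) as HU.
  replace (ns_add (ns_scal l (ns_add m1 (ns_scal (- s) y))) (ns_scal (1 - l) (ns_add m2 (ns_scal t y))))
    with (ns_add (ns_scal l m1) (ns_scal (1 - l) m2)) in HU by (vring_core; unfold l; field; lra).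
  pose proof (Hdom _ (Hadd _ _ (Hsc l _ Hm1) (Hsc (1 - l) _ Hm2)) HU) as Hd.
  rewrite Hgadd, !Hgsc in Hd by auto.
  apply div_le_div; auto.
  assert (E1 : 1 - l = s / (s + t)) by (unfold l; field; lra).
  rewrite E1 in Hd. unfold l in Hd.
  assert (Hst : 0 < s + t) by lra.
  assert (Hd' : t * g m1 + s * g m2 <= s + t).
  { apply Rmult_le_reg_r with (/ (s + t)). apply Rinv_0_lt_compat; lra.
    replace ((t * g m1 + s * g m2) * / (s + t)) with (t / (s + t) * g m1 + s / (s + t) * g m2) by (field; lra).
    replace ((s + t) * / (s + t)) with 1 by (field; lra). exact Hd. }
  lra.
Qed.

Lemma small_in_U (y : V) : exists s, 0 < s /\ U (ns_scal s y) /\ U (ns_scal (- s) y).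
Proof.
  pose proof (norm_ge0 y) as Hy.
  exists (r / (2 * (ns_norm y + 1))). assert (Hp : 0 < r / (2 * (ns_norm y + 1))).
  { apply Rdiv_lt_0_compat; lra. }
  assert (Hn : r / (2 * (ns_norm y + 1)) * ns_norm y < r).
  { apply Rle_lt_trans with (r / 2 * 1).
    - replace (r / (2 * (ns_norm y + 1)) * ns_norm y) with (r / 2 * (ns_norm y / (ns_norm y + 1))) by (field; lra).
      apply Rmult_le_compat_l; [lra|]. apply Rmult_le_reg_r with (ns_norm y + 1); [lra|].
      unfold Rdiv. rewrite Rmult_assoc, Rinv_l by lra. lra.
    - lra. }
  split; auto. split; apply HUb; rewrite ns_normZ.
  - rewrite Rabs_right by lra. exact Hn.
  - rewrite Rabs_Ropp, Rabs_right by lra. exact Hn.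
Qed.

Lemma exists_c M g y : good M g ->
  exists c, forall m t, M m -> U (ns_add m (ns_scal t y)) -> g m + t * c <= 1.
Proof.
  intros HG. pose proof HG as (H0 & Hadd & Hsc & Hgadd & Hgsc & Hdom).
  pose (E := fun l => exists m s, M m /\ 0 < s /\ U (ns_add m (ns_scal (- s) y)) /\ l = (g m - 1) / s).
  destruct (small_in_U y) as [s0 [Hs0 [HUp HUn]]].
  assert (HUp' : U (ns_add ns_zero (ns_scal s0 y))) by (rewrite ns_add0; exact HUp).
  assert (HUn' : U (ns_add ns_zero (ns_scal (- s0) y))) by (rewrite ns_add0; exact HUn).
  assert (Hb : bound E).
  { exists ((1 - g ns_zero) / s0). intros l (m & s & Hm & Hs & HU & ->).
    eapply key_ineq; eauto. }
  assert (Hne : exists l, E l).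
  { exists ((g ns_zero - 1) / s0). exists ns_zero, s0. auto. }
  destruct (completeness E Hb Hne) as [c [Hub Hlub]].
  exists c. intros m t Hm HU.
  destruct (Rtotal_order t 0) as [Hlt|[Heq|Hgt]].
  - assert (Hl : E ((g m - 1) / (- t))).
    { exists m, (- t). split; auto. split; [lra|]. split; auto. rewrite Ropp_involutive. exact HU. }
    specialize (Hub _ Hl).
    assert (g m - 1 <= - t * c).
    { replace (g m - 1) with ((g m - 1) / (- t) * (- t)) by (field; lra).
      rewrite (Rmult_comm (- t) c). apply Rmult_le_compat_r; lra. }
    lra.
  - subst t. replace (ns_add m (ns_scal 0 y)) with m in HU by vring. rewrite Rmult_0_l, Rplus_0_r. auto.
  - assert (Hup : is_upper_bound E ((1 - g m) / t)).
    { intros l (m1 & s & Hm1 & Hs & HU1 & ->). eapply key_ineq; eauto. }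
    specialize (Hlub _ Hup).
    assert (t * c <= 1 - g m).
    { replace (1 - g m) with (t * ((1 - g m) / t)) by (field; lra).
      apply Rmult_le_compat_l; lra. }
    lra.
Qed.

Variable z0 : V.
Hypothesis Hz0 : ~ U z0.

Definition PE := { p : (V -> Prop) * (V -> R) | good (fst p) (snd p) /\ fst p z0 /\ snd p z0 = 1 }.
Definition PEle (e1 e2 : PE) := ext (fst (proj1_sig e1)) (snd (proj1_sig e1)) (fst (proj1_sig e2)) (snd (proj1_sig e2)).

Lemma U0 : U ns_zero.
Proof. apply HUb. rewrite norm0. exact Hr. Qed.

Lemma base_exists : exists M g, good M g /\ M z0 /\ g z0 = 1.
Proof.
  assert (HG : good (fun x => x = ns_zero) (fun _ => 0)).
  { split; [|split; [|split; [|split; [|split]]]]; try (intros; subst; auto; try ring; try lra).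
    - rewrite ns_add0; reflexivity.
    - apply scalr0. }
  assert (Hnz : ~ z0 = ns_zero) by (intros ->; apply Hz0, U0).
  destruct (one_step _ _ z0 1 HG Hnz) as (M' & g' & HG' & Hext & HMy & Hgy).
  - intros m t -> HU. rewrite Rplus_0_l, Rmult_1_r.
    destruct (Rle_or_lt t 1) as [|Ht]; auto. exfalso. apply Hz0.
    assert (Hl : 0 <= 1 / t <= 1).
    { split. unfold Rdiv; apply Rmult_le_pos; [lra| left; apply Rinv_0_lt_compat; lra]. apply Rmult_le_reg_r with t; [lra|].
      unfold Rdiv; rewrite Rmult_assoc, Rinv_l by lra. lra. }
    pose proof (HUc _ _ (1 / t) Hl HU U0) as H.
    replace (ns_add (ns_scal (1 / t) (ns_add ns_zero (ns_scal t z0))) (ns_scal (1 - 1 / t) ns_zero))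
      with z0 in H by (vring_core; field; lra). exact H.
  - exists M', g'. auto.
Qed.

Lemma HB_main : exists f : V -> R, in_dual f /\ f z0 = 1 /\ forall x, U x -> f x <= 1.
Proof.
  destruct base_exists as (M0 & g0 & HB0).
  pose (t0 := exist _ (M0, g0) HB0 : PE).
  assert (Hinh : inhabited PE) by (constructor; exact t0).
  destruct (ZL_prop PE t0 PEle) as [t Hmax].
  - intros e. split; auto.
  - intros e1 e2 e3 [H1 H2] [H3 H4]. split; auto. intros x Hx. rewrite H2 by auto. auto.
  - intros A HA. destruct (classic (exists e, A e)) as [[e1 He1]|Hno].
    2:{ exists t0. intros s Hs. exfalso; eauto. }
    pose (Ms := fun x => exists e : PE, A e /\ fst (proj1_sig e) x).
    pose (gs := fun x => snd (proj1_sig (epsilon Hinh (fun e : PE => A e /\ fst (proj1_sig e) x))) x).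
    assert (Hkey : forall (e : PE) x, A e -> fst (proj1_sig e) x -> gs x = snd (proj1_sig e) x).
    { intros e x He Hx. unfold gs.
      destruct (epsilon_spec Hinh (fun e : PE => A e /\ fst (proj1_sig e) x)) as [Ha Hb]; [eauto|].
      set (e' := epsilon Hinh (fun e : PE => A e /\ fst (proj1_sig e) x)) in *.
      destruct (HA e e' He Ha) as [[_ E]|[_ E]]; [symmetry|]; auto. }
    assert (Hgd : good Ms gs /\ Ms z0 /\ gs z0 = 1).
    { destruct e1 as [[M1 g1] HG1] eqn:Ee1. pose proof HG1 as ((H10 & _) & Hz & Hg1).
      split; [split; [|split; [|split; [|split; [|split]]]]|split].
      - exists e1. rewrite Ee1. auto.
      - intros x y [e [He Hx]] [f [Hf Hy]].
        destruct (HA e f He Hf) as [[Hs _]|[Hs _]].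
        + exists f. split; auto. destruct (proj2_sig f) as [(_ & Ha & _) _]. auto.
        + exists e. split; auto. destruct (proj2_sig e) as [(_ & Ha & _) _]. auto.
      - intros c x [e [He Hx]]. exists e. split; auto. destruct (proj2_sig e) as [(_ & _ & Hs & _) _]. auto.
      - intros x y [e [He Hx]] [f [Hf Hy]].
        destruct (HA e f He Hf) as [[Hs _]|[Hs _]].
        + destruct (proj2_sig f) as [(_ & Ha & _ & Hga & _) _].
          rewrite !(Hkey f) by auto. auto.
        + destruct (proj2_sig e) as [(_ & Ha & _ & Hga & _) _].
          rewrite !(Hkey e) by auto. auto.
      - intros c x [e [He Hx]]. destruct (proj2_sig e) as [(_ & _ & Hs & _ & Hgs & _) _].
        rewrite !(Hkey e) by auto. auto.
      - intros x [e [He Hx]] HU. destruct (proj2_sig e) as [(_ & _ & _ & _ & _ & Hd) _].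
        rewrite (Hkey e) by auto. auto.
      - exists e1. rewrite Ee1. auto.
      - rewrite (Hkey e1) by (auto; rewrite Ee1; auto). rewrite Ee1. auto. }
    exists (exist _ (Ms, gs) Hgd). intros s Hs. split; simpl.
    + intros x Hx. exists s. auto.
    + intros x Hx. symmetry. apply Hkey; auto.
  - destruct t as [[M g] [HG [Hz Hg]]]. simpl in Hmax.
    assert (Hall : forall y, M y).
    { intros y. apply NNPP. intros Hy.
      destruct (exists_c M g y HG) as [c Hc].
      destruct (one_step M g y c HG Hy Hc) as (M' & g' & HG' & [He1 He2] & HMy & _).
      assert (Hs : good M' g' /\ M' z0 /\ g' z0 = 1).
      { split; auto. split; auto. rewrite <- He2; auto. }
      destruct (Hmax (exist _ (M', g') Hs)) as [Hb _].
      - split; auto.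
      - apply Hy. apply Hb. exact HMy. }
    pose proof HG as (_ & _ & _ & Hga & Hgs & Hd). cbn in Hga, Hgs, Hd.
    exists g. split; [|split; [exact Hg| intros x HU; apply Hd; auto]].
    split. { split; intros; [apply Hga | apply Hgs]; auto. }
    exists (2 / r). intros x.
    destruct (Req_dec (ns_norm x) 0) as [Hx0|Hx0].
    + apply ns_norm_eq0 in Hx0. subst x.
      rewrite (good_g0 M g HG), Rabs_R0, norm0. lra.
    + pose proof (norm_ge0 x) as Hxg.
      set (s := r / (2 * ns_norm x)).
      assert (Hs : 0 < s) by (unfold s; apply Rdiv_lt_0_compat; lra).
      assert (Hn : s * ns_norm x < r) by (unfold s; field_simplify; lra).
      assert (H1 : g (ns_scal s x) <= 1).
      { apply Hd; auto. apply HUb. rewrite ns_normZ, Rabs_right by lra. exact Hn. }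
      assert (H2 : g (ns_scal (- s) x) <= 1).
      { apply Hd; auto. apply HUb. rewrite ns_normZ, Rabs_Ropp, Rabs_right by lra. exact Hn. }
      rewrite Hgs in H1, H2 by auto.
      assert (Hb : Rabs (g x) <= 1 / s).
      { apply Rabs_le. split.
        - apply Rmult_le_reg_l with s; auto. field_simplify; lra.
        - apply Rmult_le_reg_l with s; auto. field_simplify; lra. }
      replace (2 / r * ns_norm x) with (1 / s) by (unfold s; field; lra). exact Hb.
Qed.

End HB.

Lemma arch_inv eps : 0 < eps -> exists N, forall n, (n >= N)%nat -> / (INR n + 1) < eps.
Proof.
  intros He. destruct (INR_archimed eps 1 ltac:(lra)) as [N HN]. exists N. intros n Hn.
  apply le_INR in Hn. pose proof (pos_INR N).
  apply Rmult_lt_reg_l with (INR n + 1); [lra|]. rewrite Rinv_r by lra.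
  assert (INR N * eps <= (INR n + 1) * eps) by (apply Rmult_le_compat_r; lra). lra.
Qed.

Section Sep.
Context {V : NormedSpace}.
Implicit Types x y z : V.

Lemma closed_open (D : V -> Prop) y : ns_closed_set D -> ~ D y ->
  exists d, 0 < d /\ forall z, ns_norm (ns_sub z y) < d -> ~ D z.
Proof.
  intros HD Hy. apply NNPP. intros Hno.
  assert (Hs : forall n : nat, exists z, D z /\ ns_norm (ns_sub z y) < / (INR n + 1)).
  { intros n. apply NNPP. intros Hn. apply Hno. exists (/ (INR n + 1)). split.
    - apply Rinv_0_lt_compat. pose proof (pos_INR n); lra.
    - intros z Hz Dz. apply Hn. eauto. }
  pose (u := fun n => epsilon (inhabits y) (fun z => D z /\ ns_norm (ns_sub z y) < / (INR n + 1))).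
  assert (Hu : forall n, D (u n) /\ ns_norm (ns_sub (u n) y) < / (INR n + 1)).
  { intros n. unfold u. apply epsilon_spec. apply Hs. }
  apply Hy. apply (HD u y); [intros n; apply Hu|].
  apply eps_norm_cv. intros eps He. destruct (arch_inv eps He) as [N HN]. exists N.
  intros n Hn. specialize (Hu n). specialize (HN n Hn). lra.
Qed.

Lemma small_norm r y : 0 < r -> exists s, 0 < s /\ ns_norm (ns_scal s y) < r.
Proof.
  intros Hr. pose proof (norm_ge0 y) as Hy.
  exists (r / (2 * (ns_norm y + 1))). assert (Hp : 0 < r / (2 * (ns_norm y + 1))).
  { apply Rdiv_lt_0_compat; lra. }
  split; auto. rewrite ns_normZ, Rabs_right by lra.
  apply Rle_lt_trans with (r / 2 * 1).
  - replace (r / (2 * (ns_norm y + 1)) * ns_norm y) with (r / 2 * (ns_norm y / (ns_norm y + 1))) by (field; lra).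
    apply Rmult_le_compat_l; [lra|]. apply Rmult_le_reg_r with (ns_norm y + 1); [lra|].
    unfold Rdiv. rewrite Rmult_assoc, Rinv_l by lra. lra.
  - lra.
Qed.

Lemma separation (D : V -> Prop) x : ns_closed_set D -> ns_convex_set D -> ~ D x -> (exists d0, D d0) ->
  exists f eps, in_dual f /\ 0 < eps /\ forall d, D d -> f d + eps <= f x.
Proof.
  intros Hcl Hcv Hx [d0 Hd0].
  destruct (closed_open D x Hcl Hx) as [r [Hr Hball]].
  pose (U := fun z => exists d b, D d /\ ns_norm b < r /\ z = ns_add (ns_sub d d0) b).
  assert (HUc : ns_convex_set U).
  { intros z1 z2 l Hl (d1 & b1 & Hd1 & Hb1 & ->) (d2 & b2 & Hd2 & Hb2 & ->).
    exists (ns_add (ns_scal l d1) (ns_scal (1 - l) d2)), (ns_add (ns_scal l b1) (ns_scal (1 - l) b2)).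
    split; [apply Hcv; auto|]. split; [|vring].
    eapply Rle_lt_trans; [apply ns_normD|]. rewrite !ns_normZ, !Rabs_right by lra.
    pose proof (norm_ge0 b1); pose proof (norm_ge0 b2).
    assert ((1 - l) * ns_norm b2 <= (1 - l) * r) by (apply Rmult_le_compat_l; lra).
    destruct (Rlt_or_le 0 l) as [Hl0|Hl0].
    - assert (l * ns_norm b1 < l * r) by (apply Rmult_lt_compat_l; lra). lra.
    - assert (l = 0) by lra. subst l. lra. }
  assert (HUb : forall z, ns_norm z < r -> U z).
  { intros z Hz. exists d0, z. split; auto. split; auto. vring. }
  assert (Hz0 : ~ U (ns_sub x d0)).
  { intros (d & b & Hd & Hb & E). apply (Hball d); auto.
    replace (ns_sub d x) with (ns_sub (ns_sub d d0) (ns_sub x d0)) by vring. rewrite E.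
    replace (ns_sub (ns_sub d d0) (ns_add (ns_sub d d0) b)) with (ns_opp b) by vring.
    rewrite norm_opp. exact Hb. }
  destruct (HB_main U r Hr HUc HUb (ns_sub x d0) Hz0) as (f & Hf & Hf1 & HfU).
  destruct (small_norm r (ns_sub x d0) Hr) as [s [Hs Hsn]].
  exists f, s. split; auto. split; auto. intros d Hd.
  assert (HU : U (ns_add (ns_sub d d0) (ns_scal s (ns_sub x d0)))) by (exists d, (ns_scal s (ns_sub x d0)); auto).
  specialize (HfU _ HU). destruct Hf as [Hl _].
  rewrite lin_add, lin_scal, !lin_sub in HfU by auto. rewrite lin_sub in Hf1 by auto.
  rewrite Hf1 in HfU. lra.
Qed.

Lemma weak_closed (D : V -> Prop) (y : nat -> V) x N : ns_closed_set D -> ns_convex_set D ->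
  (forall n, (n >= N)%nat -> D (y n)) -> weak_cv y x -> D x.
Proof.
  intros Hcl Hcv HD Hw. apply NNPP. intros Hx.
  destruct (separation D x Hcl Hcv Hx) as (f & eps & Hf & He & Hsep).
  { exists (y N). apply HD. lia. }
  destruct (weak_eps y x f Hw Hf eps He) as [N2 HN2].
  specialize (HN2 (max N N2) ltac:(lia)). specialize (Hsep _ (HD (max N N2) ltac:(lia))).
  apply Rabs_lt_inv in HN2. lra.
Qed.

Lemma sublevel_cc (phi : V -> ERbar) c : convex_fun phi -> lsc_fun phi ->
  ns_closed_set (fun x => ERle (phi x) (Fin c)) /\ ns_convex_set (fun x => ERle (phi x) (Fin c)).
Proof.
  intros Hcv Hlsc. split.
  - intros u x Hu Hc. exact (Hlsc u x c Hc Hu).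
  - intros x y t Ht Hx Hy.
    destruct (Req_dec t 0) as [->|H0].
    { replace (ns_add (ns_scal 0 x) (ns_scal (1 - 0) y)) with y by vring. exact Hy. }
    destruct (Req_dec t 1) as [->|H1].
    { replace (ns_add (ns_scal 1 x) (ns_scal (1 - 1) y)) with x by vring. exact Hx. }
    specialize (Hcv x y t ltac:(lra)).
    destruct (phi x) as [a|] eqn:Ea; [|contradiction]. destruct (phi y) as [b|] eqn:Eb; [|contradiction].
    simpl in Hx, Hy.
    destruct (phi (ns_add (ns_scal t x) (ns_scal (1 - t) y))) as [p|]; simpl in *; [|contradiction].
    nra.
Qed.

Lemma weak_lsc (phi : V -> ERbar) (u : nat -> V) x c N : convex_fun phi -> lsc_fun phi ->
  weak_cv u x -> (forall n, (n >= N)%nat -> ERle (phi (u n)) (Fin c)) -> ERle (phi x) (Fin c).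
Proof.
  intros Hcv Hlsc Hw Hn. destruct (sublevel_cc phi c Hcv Hlsc) as [H1 H2].
  exact (weak_closed _ u x N H1 H2 Hn Hw).
Qed.

End Sep.

Section Baire.
Context {V : NormedSpace}.
Implicit Types x y z : V.

Lemma baire (HVc : ns_complete V) (F : nat -> V -> Prop) (HF : forall k, ns_closed_set (F k))
  x0 r0 (Hr0 : 0 < r0) (Hcov : forall y, ns_norm (ns_sub y x0) < r0 -> exists k, F k y) :
  exists k x s, 0 < s /\ ns_norm (ns_sub x x0) < r0 /\ forall y, ns_norm (ns_sub y x) < s -> F k y.
Proof.
  apply NNPP. intros Hno.
  assert (Hneg : forall k x s, 0 < s -> ns_norm (ns_sub x x0) < r0 ->
            exists y, ns_norm (ns_sub y x) < s /\ ~ F k y).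
  { intros k x s Hs Hx. apply NNPP. intros Hn. apply Hno. exists k, x, s. split; auto. split; auto.
    intros y Hy. apply NNPP. intros Hk. apply Hn. eauto. }
  pose (Inv := fun p : V * R => 0 < snd p /\ ns_norm (ns_sub (fst p) x0) + snd p <= r0 / 2).
  pose (Q := fun (k : nat) (p q : V * R) => 0 < snd q /\ ns_norm (ns_sub (fst q) (fst p)) + snd q <= snd p /\
             snd q <= / (INR k + 1) /\ forall z, ns_norm (ns_sub z (fst q)) <= snd q -> ~ F k z).
  assert (Hex : forall k p, Inv p -> exists q, Q k p q).
  { intros k [x s] [Hs Hx]. simpl in *.
    pose proof (norm_ge0 (ns_sub x x0)).
    destruct (Hneg k x s Hs ltac:(lra)) as [y [Hy Hny]].
    destruct (closed_open (F k) y (HF k) Hny) as [d [Hd Hball]].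
    pose (s' := Rmin (d / 2) (Rmin (s - ns_norm (ns_sub y x)) (/ (INR k + 1)))).
    assert (Hk : 0 < / (INR k + 1)) by (apply Rinv_0_lt_compat; pose proof (pos_INR k); lra).
    assert (H1 : s' <= d / 2) by apply Rmin_l.
    assert (H2 : s' <= s - ns_norm (ns_sub y x)) by (eapply Rle_trans; [apply Rmin_r|apply Rmin_l]).
    assert (H3 : s' <= / (INR k + 1)) by (eapply Rle_trans; [apply Rmin_r|apply Rmin_r]).
    assert (H4 : 0 < s').
    { unfold s'. apply Rmin_glb_lt; [lra|]. apply Rmin_glb_lt; lra. }
    exists (y, s'). unfold Q; simpl. split; auto. split; [lra|]. split; auto.
    intros z Hz. apply Hball. lra. }
  pose (inh := inhabits (x0, r0)).
  pose (stepF := fun k p => epsilon inh (Q k p)).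
  pose (seq := fix seq (n : nat) : V * R := match n with O => (x0, r0 / 2) | S k => stepF k (seq k) end).
  assert (Hseq : forall n, Inv (seq n) /\ Q n (seq n) (seq (S n))).
  { intros n. induction n as [|n IH].
    - assert (I0 : Inv (seq O)).
      { unfold Inv; simpl. replace (ns_sub x0 x0) with (@ns_zero V) by vring. rewrite norm0. lra. }
      split; auto. simpl. apply (epsilon_spec inh (Q O (x0, r0 / 2))). apply Hex. exact I0.
    - destruct IH as [[Hi1 Hi2] HQ].
      assert (I1 : Inv (seq (S n))).
      { destruct HQ as (Hq1 & Hq2 & _). split; auto.
        pose proof (norm_tri (fst (seq (S n))) (fst (seq n)) x0). lra. }
      split; auto. apply (epsilon_spec inh (Q (S n) (seq (S n)))). apply Hex. exact I1. }
  pose (xs := fun n => fst (seq n)). pose (ss := fun n => snd (seq n)).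
  assert (Hnest : forall k n, (n >= k)%nat -> ns_norm (ns_sub (xs n) (xs k)) + ss n <= ss k).
  { intros k n Hn. induction Hn as [|n Hn IH].
    - unfold xs, ss. replace (ns_sub (fst (seq k)) (fst (seq k))) with (@ns_zero V) by vring. rewrite norm0. lra.
    - destruct (Hseq n) as [_ (Hq1 & Hq2 & _)].
      pose proof (norm_tri (xs (S n)) (xs n) (xs k)). unfold xs, ss in *. lra. }
  assert (Hss : forall n, 0 < ss n /\ ss (S n) <= / (INR n + 1)).
  { intros n. destruct (Hseq n) as [[Hi _] (_ & _ & Hq3 & _)]. split; auto. }
  destruct (HVc xs) as [xstar Hxstar].
  { intros eps He. destruct (arch_inv (eps / 2) ltac:(lra)) as [N HN]. exists (S N).
    intros n m Hn Hm.
    pose proof (Hnest (S N) n Hn). pose proof (Hnest (S N) m Hm).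
    pose proof (Hss n). pose proof (Hss m). destruct (Hss N) as [_ HsN].
    specialize (HN N ltac:(lia)).
    pose proof (norm_tri (xs n) (xs (S N)) (xs m)). rewrite (norm_sym (xs (S N)) (xs m)) in *. lra. }
  assert (Hclose : forall k, ns_norm (ns_sub xstar (xs k)) <= ss k).
  { intros k. apply Rnot_lt_le. intros Hlt.
    set (g := ns_norm (ns_sub xstar (xs k)) - ss k).
    destruct (norm_cv_eps xs xstar Hxstar g ltac:(unfold g; lra)) as [N HN].
    specialize (HN (max N k) ltac:(lia)). pose proof (Hnest k (max N k) ltac:(lia)).
    pose proof (Hss (max N k)).
    pose proof (norm_tri xstar (xs (max N k)) (xs k)). rewrite (norm_sym xstar (xs (max N k))) in *.
    unfold g in *. lra. }
  destruct (Hcov xstar) as [k Hk].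
  { pose proof (Hclose O). unfold xs, ss in H; simpl in H. lra. }
  destruct (Hseq k) as [_ (_ & _ & _ & Hq4)]. apply (Hq4 xstar); auto. apply Hclose.
Qed.

Lemma phi_usc (HVc : ns_complete V) (phi : V -> ERbar) (Hcvx : convex_fun phi) (Hlsc : lsc_fun phi)
  v r (Hr : 0 < r) (Hdom : forall y, ns_norm (ns_sub y v) < r -> phi y <> PInf) pv (Hpv : phi v = Fin pv)
  eps (Heps : 0 < eps) :
  exists d, 0 < d /\ forall y, ns_norm (ns_sub y v) < d -> exists p, phi y = Fin p /\ p <= pv + eps.
Proof.
  pose (F := fun (k : nat) y => ERle (phi y) (Fin (INR k))).
  assert (HF : forall k, ns_closed_set (F k)) by (intros k; exact (proj1 (sublevel_cc phi (INR k) Hcvx Hlsc))).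
  destruct (baire HVc F HF v r Hr) as (k & x & s & Hs & Hx & Hball).
  { intros y Hy. destruct (finite_of phi y (Hdom y Hy)) as [p Hp].
    destruct (INR_archimed 1 p ltac:(lra)) as [k Hk]. exists k. unfold F. rewrite Hp. simpl. lra. }
  pose (q := ns_add v (ns_sub v x)).
  destruct (finite_of phi q) as [pq Hpq].
  { apply Hdom. unfold q. replace (ns_sub (ns_add v (ns_sub v x)) v) with (ns_sub v x) by vring.
    rewrite norm_sym. exact Hx. }
  pose (Mb := (INR k + pq) / 2).
  assert (Hloc : forall y, ns_norm (ns_sub y v) < s / 2 -> exists p, phi y = Fin p /\ p <= Mb).
  { intros y Hy.
    pose (x' := ns_add x (ns_scal 2 (ns_sub y v))).
    assert (Hx' : F k x').
    { apply Hball. unfold x'. replace (ns_sub (ns_add x (ns_scal 2 (ns_sub y v))) x) with (ns_scal 2 (ns_sub y v)) by vring.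
      rewrite ns_normZ, Rabs_right by lra. lra. }
    unfold F in Hx'. destruct (phi x') as [a|] eqn:Ea; [|contradiction]. simpl in Hx'.
    specialize (Hcvx x' q (1/2) ltac:(lra)). rewrite Ea, Hpq in Hcvx.
    replace (ns_add (ns_scal (1 / 2) x') (ns_scal (1 - 1 / 2) q)) with y in Hcvx
      by (unfold x', q; vring_core; field).
    destruct (phi y) as [p|]; simpl in Hcvx; [|contradiction]. exists p. split; auto. unfold Mb. lra. }
  pose (D := Rabs (Mb - pv) + 1).
  assert (HD : 0 < D) by (unfold D; pose proof (Rabs_pos (Mb - pv)); lra).
  pose (t := Rmin (1 / 2) (eps / D)).
  assert (Ht : 0 < t) by (unfold t; apply Rmin_glb_lt; [lra| apply Rdiv_lt_0_compat; lra]).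
  assert (Ht1 : t <= 1 / 2) by apply Rmin_l.
  assert (Ht2 : t * (Mb - pv) <= eps).
  { apply Rle_trans with (t * D).
    - apply Rmult_le_compat_l; [lra|]. unfold D. pose proof (Rle_abs (Mb - pv)). lra.
    - apply Rle_trans with (eps / D * D); [apply Rmult_le_compat_r; [lra| apply Rmin_r]|].
      right. field. lra. }
  exists (t * (s / 2)). split; [apply Rmult_lt_0_compat; lra|].
  intros y Hy.
  pose (y' := ns_add v (ns_scal (/ t) (ns_sub y v))).
  destruct (Hloc y') as [p' [Hp' Hp'b]].
  { unfold y'. replace (ns_sub (ns_add v (ns_scal (/ t) (ns_sub y v))) v) with (ns_scal (/ t) (ns_sub y v)) by vring.
    rewrite ns_normZ, Rabs_right by (left; apply Rinv_0_lt_compat; lra).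
    apply Rmult_lt_reg_l with t; auto. rewrite <- Rmult_assoc, Rinv_r, Rmult_1_l by lra. exact Hy. }
  specialize (Hcvx y' v t ltac:(lra)). rewrite Hp', Hpv in Hcvx.
  replace (ns_add (ns_scal t y') (ns_scal (1 - t) v)) with y in Hcvx
    by (unfold y'; vring_core; field; lra).
  destruct (phi y) as [p|]; simpl in Hcvx; [|contradiction]. exists p. split; auto.
  assert (t * p' <= t * Mb) by (apply Rmult_le_compat_l; lra). lra.
Qed.

End Baire.

Theorem mainTheorem3
  (V B : NormedSpace) (HVc : ns_complete V) (HVr : ns_reflexive V) (HBc : ns_complete B)
  (C : V -> Prop) (HCne : exists x, C x) (HCcl : ns_closed_set C) (HCcv : ns_convex_set C)
  (A : B -> Prop) (HAne : exists a, A a)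
  (T : B -> V -> V -> R) (phi : V -> ERbar) (K : V -> V -> Prop) (m : V -> R)
  (HT : H_T A T) (Hphi : H_phi phi C) (HK : H_K C K) (H0 : H_0 A T phi C K)
  (Hm : in_dual m) (a : B) (Ha : A a) :
  (forall (wn un : nat -> V) (w u : V),
     (forall n, C (wn n)) -> (forall n, C (un n)) ->
     (forall n, S_a T phi K m a (wn n) (un n)) ->
     weak_cv wn w -> weak_cv un u ->
     S_a T phi K m a w u) /\
  ns_bounded_set (fun u => exists w, C w /\ S_a T phi K m a w u).
Proof.
  pose proof (part2 V B C A T phi K m HT HK H0 Hm a Ha) as Hbd.
  split; [|exact Hbd].
  intros wn un w u HCw HCu HS Hw Hu.
  destruct Hbd as [Mb HMb].
  assert (Hun : forall n, ns_norm (un n) <= Mb) by (intros n; apply HMb; exists (wn n); auto).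
  destruct HT as (HTd & _ & _ & _ & HTmon & HTc).
  destruct Hphi as (_ & Hcvx & Hlsc & Hint).
  destruct HK as (HK1 & HK2 & HK3).
  assert (Cw : C w) by exact (weak_closed C wn w O HCcl HCcv (fun n _ => HCw n) Hw).
  assert (Kwu : K w u) by exact (HK3 wn un w u HCw HCu (fun n => proj1 (HS n)) Hw Hu).
  destruct (HK1 w Cw) as (KC & _ & Kcl & Kcv).
  assert (Cu : C u) by auto.
  assert (Hfin : forall y, C y -> exists p, phi y = Fin p).
  { intros y Cy. destruct (Hint y Cy) as [r [Hr Hd]]. apply finite_of, Hd.
    replace (ns_sub y y) with (@ns_zero V) by vring. rewrite norm0. exact Hr. }
  destruct (Hfin u Cu) as [pu Hpu].
  pose proof (proj1 Hm) as Hml.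
  (* Minty form *)
  assert (Hminty : forall v pv, K w v -> phi v = Fin pv ->
            T a v (ns_sub v u) + pv - pu >= m (ns_sub v u)).
  { intros v pv Kv Hpv. apply Rnot_lt_ge. intros Hlt.
    set (dl := m (ns_sub v u) - (T a v (ns_sub v u) + pv - pu)).
    assert (Hdl : 0 < dl) by (unfold dl; lra).
    destruct (HK2 wn w v HCw Hw Kv) as (vn & HCvn & HKvn & Hvn).
    assert (Cv : C v) by auto.
    destruct (Hint v Cv) as [r [Hr Hdom]].
    destruct (phi_usc HVc phi Hcvx Hlsc v r Hr Hdom pv Hpv (dl / 8) ltac:(lra)) as [d1 [Hd1 Husc]].
    destruct (HTd a v) as [HTvl HTvb].
    destruct (dual_pos (T a v) (HTd a v)) as [MT [HMT HMTb]].
    destruct (dual_pos m Hm) as [Mm [HMm HMmb]].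
    pose (e0 := Rmin d1 (Rmin 1 (Rmin (dl / (8 * MT)) (dl / (8 * Mm))))).
    assert (He0 : 0 < e0).
    { unfold e0. repeat apply Rmin_glb_lt; try lra; apply Rdiv_lt_0_compat; lra. }
    assert (He01 : e0 <= d1) by apply Rmin_l.
    assert (He02 : e0 <= 1) by (eapply Rle_trans; [apply Rmin_r|apply Rmin_l]).
    assert (He03 : e0 <= dl / (8 * MT)) by (eapply Rle_trans; [apply Rmin_r|]; eapply Rle_trans; [apply Rmin_r|apply Rmin_l]).
    assert (He04 : e0 <= dl / (8 * Mm)) by (eapply Rle_trans; [apply Rmin_r|]; eapply Rle_trans; [apply Rmin_r|apply Rmin_r]).
    destruct (norm_cv_eps vn v Hvn e0 He0) as [N1 HN1].
    pose proof (norm_ge0 v) as Hv0.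
    pose (Bn := ns_norm v + 1 + Mb + 1).
    assert (HBn : 0 < Bn) by (unfold Bn; pose proof (Hun O); pose proof (norm_ge0 (un O)); lra).
    destruct (HTc a Ha vn v Hvn (dl / (8 * Bn)) ltac:(apply Rdiv_lt_0_compat; lra)) as [N2 HN2].
    destruct (weak_eps un u (T a v) Hu (HTd a v) (dl / 8) ltac:(lra)) as [N3 HN3].
    destruct (weak_eps un u m Hu Hm (dl / 8) ltac:(lra)) as [N4 HN4].
    assert (Hev : forall n, (n >= max N1 (max N2 (max N3 N4)))%nat ->
               ERle (phi (un n)) (Fin (pu - dl / 4))).
    { intros n Hn.
      specialize (HN1 n ltac:(lia)). specialize (HN2 n ltac:(lia)).
      specialize (HN3 n ltac:(lia)). specialize (HN4 n ltac:(lia)).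
      apply Rabs_lt_inv in HN3. apply Rabs_lt_inv in HN4.
      destruct (Husc (vn n) ltac:(lra)) as [q [Hq Hqb]].
      destruct (HS n) as [_ [pun [Hpun Hineq]]].
      specialize (Hineq (vn n) (HKvn n)). rewrite Hq in Hineq.
      rewrite Hpun. simpl.
      pose proof (HTmon a Ha (vn n) (un n)) as Hmon.
      destruct (HTd a (vn n)) as [HTnl _]. destruct (HTd a (un n)) as [HTul _].
      assert (Hvu : ns_norm (ns_sub (vn n) (un n)) <= Bn).
      { pose proof (norm_sub_le (vn n) (un n)). pose proof (norm_le_sub (vn n) v).
        pose proof (Hun n). unfold Bn. lra. }
      pose proof (Rabs_le_inv _ _ (HN2 (ns_sub (vn n) (un n)))) as Hc.
      assert (Hc' : Rabs (T a (vn n) (ns_sub (vn n) (un n)) - T a v (ns_sub (vn n) (un n))) <= dl / 8).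
      { eapply Rle_trans; [apply (HN2 (ns_sub (vn n) (un n)))|].
        apply Rle_trans with (dl / (8 * Bn) * Bn).
        - apply Rmult_le_compat_l; [left; apply Rdiv_lt_0_compat; lra| exact Hvu].
        - right. field. lra. }
      apply Rabs_le_inv in Hc'.
      assert (HT1 : Rabs (T a v (ns_sub (vn n) v)) <= dl / 8).
      { eapply Rle_trans; [apply HMTb|].
        apply Rle_trans with (MT * (dl / (8 * MT))).
        - apply Rmult_le_compat_l; lra.
        - right. field. lra. }
      assert (Hm1 : Rabs (m (ns_sub (vn n) v)) <= dl / 8).
      { eapply Rle_trans; [apply HMmb|].
        apply Rle_trans with (Mm * (dl / (8 * Mm))).
        - apply Rmult_le_compat_l; lra.
        - right. field. lra. }
      apply Rabs_le_inv in HT1. apply Rabs_le_inv in Hm1.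
      unfold dl in *. rewrite !lin_sub in * by auto. lra. }
    pose proof (weak_lsc phi un u (pu - dl / 4) _ Hcvx Hlsc Hu Hev) as Hl.
    rewrite Hpu in Hl. simpl in Hl. lra. }
  split; auto. exists pu. split; auto.
  intros v Kv. assert (Cv : C v) by auto. destruct (Hfin v Cv) as [pv Hpv]. rewrite Hpv.
  apply Rnot_lt_ge. intros Hlt.
  set (gp := m (ns_sub v u) - (T a u (ns_sub v u) + pv - pu)).
  assert (Hgp : 0 < gp) by (unfold gp; lra).
  pose (tn := fun n : nat => / (INR n + 2)).
  assert (Htn : forall n, 0 < tn n < 1).
  { intros n. unfold tn. pose proof (pos_INR n). split.
    - apply Rinv_0_lt_compat; lra.
    - rewrite <- Rinv_1. apply Rinv_lt_contravar; lra. }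
  pose (vt := fun n => ns_add (ns_scal (tn n) v) (ns_scal (1 - tn n) u)).
  assert (Hvt : norm_cv vt u).
  { apply eps_norm_cv. intros eps He.
    pose proof (norm_ge0 (ns_sub v u)) as Hn0.
    destruct (arch_inv (eps / (ns_norm (ns_sub v u) + 1)) ltac:(apply Rdiv_lt_0_compat; lra)) as [N HN].
    exists N. intros n Hn. specialize (HN n Hn).
    unfold vt. replace (ns_sub (ns_add (ns_scal (tn n) v) (ns_scal (1 - tn n) u)) u) with (ns_scal (tn n) (ns_sub v u)) by vring.
    rewrite ns_normZ, Rabs_right by (left; apply Htn).
    assert (tn n <= / (INR n + 1)).
    { unfold tn. apply Rinv_le_contravar; pose proof (pos_INR n); lra. }
    apply Rle_lt_trans with (eps / (ns_norm (ns_sub v u) + 1) * ns_norm (ns_sub v u)).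
    - apply Rmult_le_compat_r; lra.
    - apply Rlt_le_trans with (eps / (ns_norm (ns_sub v u) + 1) * (ns_norm (ns_sub v u) + 1)).
      + apply Rmult_lt_compat_l; [apply Rdiv_lt_0_compat|]; lra.
      + right. field. lra. }
  pose proof (norm_ge0 (ns_sub v u)) as Hn0.
  destruct (HTc a Ha vt u Hvt (gp / (2 * (ns_norm (ns_sub v u) + 1))) ltac:(apply Rdiv_lt_0_compat; lra)) as [N HN].
  specialize (HN N (le_n N)).
  specialize (Htn N).
  assert (Kvt : K w (vt N)) by (apply Kcv; auto; lra).
  specialize (Hcvx v u (tn N) Htn). rewrite Hpv, Hpu in Hcvx.
  fold (vt N) in Hcvx.
  destruct (phi (vt N)) as [q|] eqn:Eq; simpl in Hcvx; [|contradiction].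
  specialize (Hminty (vt N) q Kvt Eq).
  destruct (HTd a (vt N)) as [HTl _]. destruct (HTd a u) as [HTul _].
  assert (Hb : Rabs (T a (vt N) (ns_sub v u) - T a u (ns_sub v u)) <= gp / 2).
  { eapply Rle_trans; [apply HN|].
    apply Rle_trans with (gp / (2 * (ns_norm (ns_sub v u) + 1)) * (ns_norm (ns_sub v u) + 1)).
    - apply Rmult_le_compat_l; [left; apply Rdiv_lt_0_compat|]; lra.
    - right. field. lra. }
  apply Rabs_le_inv in Hb.
  unfold vt in Hminty, Hb. rewrite !lin_sub in Hminty, Hb by auto.
  rewrite !lin_add, !lin_scal in Hminty by auto.
  unfold gp in *.
  set (t := tn N) in *.
  set (X := T a (ns_add (ns_scal t v) (ns_scal (1 - t) u))) in *.
  assert (Hk : t * (X v - X u + pv - pu - (m v - m u)) >= 0).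
  { assert (E : t * (X v - X u + pv - pu - (m v - m u)) =
      (t * X v + (1 - t) * X u - X u) + t * pv - t * pu - (t * m v + (1 - t) * m u - m u)) by ring.
    rewrite E. lra. }
  assert (X v - X u + pv - pu - (m v - m u) >= 0).
  { destruct (Rge_gt_dec (X v - X u + pv - pu - (m v - m u)) 0) as [|Hneg]; auto.
    exfalso. assert (t * (X v - X u + pv - pu - (m v - m u)) < 0) by (apply Rmult_pos_neg; lra). lra. }
  rewrite !lin_sub in * by auto. lra.
Qed.
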